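(* Let $\Gamma$ be a set of basic relations of Allen's interval algebra. If $\mathsf{m}\in\Gamma$, then $\Gamma$ implements $\mathsf{p}$. If $\mathsf{f}\in\Gamma$ and $\mathsf{s}\in\Gamma$, then $\Gamma$ implements $\mathsf{d}$ and $\Gamma$ implements $\mathsf{o}$.
   Context: Allen's interval algebra has domain $\mathbb{I}=\{[a,b] : a,b\in\mathbb{Q},\ a<b\}$; for $I=[a,b]$ write $I^-=a$, $I^+=b$. Relations: $x\,\mathsf{p}\,y$ iff $x^+<y^-$; $x\,\mathsf{m}\,y$ iff $x^+=y^-$; $x\,\mathsf{o}\,y$ iff $x^-<y^-<x^+<y^+$; $x\,\mathsf{d}\,y$ iff $y^-<x^-$ and $x^+<y^+$; $x\,\mathsf{s}\,y$ iff $x^-=y^-$ and $x^+<y^+$; $x\,\mathsf{f}\,y$ iff $x^+=y^+$ and $y^-<x^-$. A (simple) implementation of a binary relation $r$ in a constraint language $\Gamma$ is a CSP instance $\mathcal{C}_r$ over $\Gamma$ with primary variables $x_1,x_2$ and possibly auxiliary variables $y_1,\dots,y_\ell$ such that (i) every assignment satisfying $\mathcal{C}_r$ satisfies $x_1\,r\,x_2$, and (ii) every assignment to $x_1,x_2$ not satisfying $x_1\,r\,x_2$ can be extended to $y_1,\dots,y_\ell$ so that all but one constraint of $\mathcal{C}_r$ are satisfied. $\Gamma$ implements $r$ if such an implementation exists. *)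

(* Defs.v *)
From HB Require Import structures.
From mathcomp Require Import all_boot all_order all_algebra.
Set Implicit Arguments. Unset Strict Implicit. Unset Printing Implicit Defensive.
Import Order.TTheory GRing.Theory Num.Theory.
Local Open Scope ring_scope.

(* An interval [a,b] with a,b rational and a < b; lo I = I^-, hi I = I^+. *)
Record interval := Interval { lo : rat; hi : rat; lo_lt_hi : lo < hi }.

Inductive basic := Bp | Bm | Bo | Bd | Bs | Bf
                 | Bpi | Bmi | Boi | Bdi | Bsi | Bfi | Beq.

Definition rel_p (x y : interval) : bool := hi x < lo y.
Definition rel_m (x y : interval) : bool := hi x == lo y.
Definition rel_o (x y : interval) : bool :=
  [&& lo x < lo y, lo y < hi x & hi x < hi y].
Definition rel_d (x y : interval) : bool := (lo y < lo x) && (hi x < hi y).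
Definition rel_s (x y : interval) : bool := (lo x == lo y) && (hi x < hi y).
Definition rel_f (x y : interval) : bool := (hi x == hi y) && (lo y < lo x).
Definition rel_eq (x y : interval) : bool := (lo x == lo y) && (hi x == hi y).

Definition rel_of (b : basic) : interval -> interval -> bool :=
  match b with
  | Bp => rel_p | Bm => rel_m | Bo => rel_o | Bd => rel_d | Bs => rel_s | Bf => rel_f
  | Bpi => fun x y => rel_p y x | Bmi => fun x y => rel_m y x
  | Boi => fun x y => rel_o y x | Bdi => fun x y => rel_d y x
  | Bsi => fun x y => rel_s y x | Bfi => fun x y => rel_f y x
  | Beq => rel_eq
  end.

Record constraint (n : nat) := Constraint { crel : basic; cfst : 'I_n; csnd : 'I_n }.

Definition sat (n : nat) (alpha : 'I_n -> interval) (c : constraint n) : bool :=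
  rel_of (crel c) (alpha (cfst c)) (alpha (csnd c)).

(* Simple implementation of r in Gamma: a CSP instance over Gamma with
   variables 'I_(l.+2); primary variables x1 = index 0, x2 = index 1,
   auxiliary variables y1..yl = indices 2..l+1. *)
Definition implements (Gamma : pred basic) (r : interval -> interval -> bool) : Prop :=
  exists (l : nat) (C : seq (constraint l.+2)),
    all (fun c => Gamma (crel c)) C /\
    (forall alpha : 'I_l.+2 -> interval,
        all (sat alpha) C -> r (alpha ord0) (alpha (inord 1))) /\
    (forall x1 x2 : interval, ~~ r x1 x2 ->
        exists alpha : 'I_l.+2 -> interval,
          [/\ alpha ord0 = x1, alpha (inord 1) = x2 &
              count (fun c => ~~ sat alpha c) C = 1%N]).

(* Main.v *)
Require Import Defs.
From mathcomp Require Import all_boot all_order all_algebra.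
From mathcomp Require Import lra.
Import Order.TTheory GRing.Theory Num.Theory.
Local Open Scope ring_scope.

Definition I0 : 'I_3 := @Ordinal 3 0 isT.
Definition I1 : 'I_3 := @Ordinal 3 1 isT.
Definition I2 : 'I_3 := @Ordinal 3 2 isT.
Lemma i1E : (inord 1 : 'I_3) = I1.
Proof. by apply/val_inj; rewrite /= inordK. Qed.
Lemma i0E : (ord0 : 'I_3) = I0.
Proof. by apply/val_inj. Qed.

Definition asg (x1 x2 y : Defs.interval) (i : 'I_3) : Defs.interval :=
  match val i with 0%N => x1 | 1%N => x2 | _ => y end.

Lemma asg0 x1 x2 y : asg x1 x2 y ord0 = x1. Proof. by []. Qed.
Lemma asg1 x1 x2 y : asg x1 x2 y (inord 1) = x2. Proof. by rewrite i1E. Qed.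

Lemma lt_mid {a b : rat} : a < b -> a < (a + b) / 2. Proof. move=> h; lra. Qed.
Lemma mid_lt {a b : rat} : a < b -> (a + b) / 2 < b. Proof. move=> h; lra. Qed.
Lemma lt_p1 (a : rat) : a < a + 1. Proof. lra. Qed.
Lemma m1_lt {a b : rat} : a < b -> a - 1 < b. Proof. move=> h; lra. Qed.
Lemma m1_lt' (a : rat) : a - 1 < a. Proof. lra. Qed.

Theorem mainTheorem6 (Gamma : pred basic) :
  (Gamma Bm -> implements Gamma rel_p) /\
  (Gamma Bf -> Gamma Bs -> implements Gamma rel_d /\ implements Gamma rel_o).
Proof.
split.
- move=> Hm; exists 1%N, [:: Constraint Bm I0 I2; Constraint Bm I2 I1].
  split; first by rewrite /= Hm.
  split.
  + move=> alpha; rewrite i1E i0E /= /sat /= /rel_m /rel_p andbT => /andP[/eqP h1 /eqP h2].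
    have := lo_lt_hi (alpha I2); lra.
  + move=> x1 x2; rewrite /rel_p -leNgt => h.
    exists (asg x1 x2 (Defs.Interval (lt_p1 (hi x1)))); split => //; first exact: asg1.
    rewrite /= /sat /= /rel_m /= eqxx /=.
    by rewrite gt_eqF //; lra.
- move=> Hf Hs; split.
  + exists 1%N, [:: Constraint Bf I0 I2; Constraint Bs I2 I1].
    split; first by rewrite /= Hf Hs.
    split.
    * move=> alpha; rewrite i1E i0E /= /sat /= /rel_f /rel_s /rel_d andbT.
      move=> /andP[/andP[/eqP h1 h2] /andP[/eqP h3 h4]].
      apply/andP; split; lra.
    * move=> x1 x2; rewrite /rel_d negb_and -!leNgt => h.
      have [h1|h1] := leP (hi x2) (hi x1).
      - exists (asg x1 x2 (Defs.Interval (m1_lt (lo_lt_hi x1)))); split => //; first exact: asg1.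
        rewrite /= /sat /= /rel_f /rel_s /= /asg /= eqxx m1_lt' /=.
        by rewrite (@ltNge _ _ (hi x1)) h1 andbF.
      - have hh : lo x1 <= lo x2.
          case/orP: h => // h; by move: h1; rewrite ltNge h.
        exists (asg x1 x2 (Defs.Interval (lt_mid (lo_lt_hi x2)))); split => //; first exact: asg1.
        rewrite /= /sat /= /rel_f /rel_s /= /asg /= eqxx mid_lt ?lo_lt_hi //=.
        by rewrite (@ltNge _ _ (lo x2)) hh andbF.
  + exists 1%N, [:: Constraint Bs I2 I1; Constraint Bf I2 I0].
    split; first by rewrite /= Hf Hs.
    split.
    * move=> alpha; rewrite i1E i0E /= /sat /= /rel_f /rel_s /rel_o andbT.
      move=> /andP[/andP[/eqP h1 h2] /andP[/eqP h3 h4]].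
      have := lo_lt_hi (alpha I2).
      move=> h5; apply/and3P; split; lra.
    * move=> x1 x2 h.
      have [h1|h1] := leP (hi x2) (hi x1).
      - exists (asg x1 x2 (Defs.Interval (lt_mid (lo_lt_hi x2)))); split => //; first exact: asg1.
        rewrite /= /sat /= /rel_f /rel_s /= /asg /= eqxx mid_lt ?lo_lt_hi //=.
        have := lo_lt_hi x2 => h2.
        rewrite lt_eqF //; lra.
      - have hh : (lo x2 <= lo x1) || (hi x1 <= lo x2).
          move: h; rewrite /rel_o h1 andbT negb_and -!leNgt => /orP[->//|h3].
          by rewrite h3 orbT.
        exists (asg x1 x2 (Defs.Interval (mid_lt (lo_lt_hi x1)))); split => //; first exact: asg1.
        rewrite /= /sat /= /rel_f /rel_s /= /asg /= eqxx lt_mid ?lo_lt_hi //= h1 andbT.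
        have := lo_lt_hi x1 => h2.
        case/orP: hh => hh.
        by rewrite gt_eqF //; lra.
        by rewrite lt_eqF //; lra.
Qed.
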